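(* Fix constants $c>0$, $g>0$, $A>0$, $Q\in\mathbb{R}$ and $\widetilde Z\in\mathbb{R}$, and set $U=Q/A$. For positive integrable functions $f:\mathbb{R}\to(0,\infty)$ define the kinetic energy functional $$\mathcal E(f)=\int_{\mathbb{R}}\left(\frac{\xi^2}{2}f(\xi)+c^2f(\xi)\log f(\xi)+c^2 f(\xi)\log\!\big(c\sqrt{2\pi}\big)+g\widetilde Z f(\xi)\right)d\xi .$$ Consider the minimization problem $\min\mathcal E(f)$ under the constraints $$f>0,\qquad \int_{\mathbb{R}}f(\xi)\,d\xi=A,\qquad \int_{\mathbb{R}}\xi f(\xi)\,d\xi=Q .$$ Then the minimum is attained (a.e.) by the function $$\mathcal M(\xi)=\frac{A}{c}\,\chi\!\left(\frac{\xi-U}{c}\right),\qquad \chi(w)=\frac{1}{\sqrt{2\pi}}\exp\!\left(-\frac{w^2}{2}\right),$$ and the minimal energy is $$\mathcal E(\mathcal M)=\frac{Q^2}{2A}+c^2A\ln A+gA\widetilde Z .$$ Moreover, if $A=A(X)>0$ and $\widetilde Z=\widetilde Z(X)$ depend (smoothly) on $X$ and form a still water steady state, i.e. $Q=0$ (so $U=0$) and $c^2\ln A(X)+g\widetilde Z(X)$ is constant in $X$, then $\mathcal M(X,\xi)=\frac{A(X)}{c}\chi\!\left(\frac{\xi}{c}\right)$ satisfies $$\xi\,\partial_X\mathcal M-g\,\partial_X\widetilde Z\,\partial_\xi\mathcal M=0 .$$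
   Context: Here $A$ is the equivalent wet area, $Q$ the equivalent discharge, $c$ the sonic speed, $g$ gravity and $\widetilde Z$ the pseudo-altitude of a pressurised pipe-flow model $\partial_tA+\partial_XQ=0$, $\partial_tQ+\partial_X(Q^2/A+c^2A)+g\partial_X\widetilde Z=0$. A still water steady state of this model is a state with $U=Q/A=0$ and $c^2\ln A+g\widetilde Z=\text{const}$. $\log$ and $\ln$ denote the natural logarithm. *)

(* Defs.v *)
From HB Require Import structures.
From mathcomp Require Import all_boot all_order all_algebra.
From mathcomp Require Import all_classical all_reals all_analysis.
Set Implicit Arguments. Unset Strict Implicit. Unset Printing Implicit Defensive.
Import Order.TTheory GRing.Theory Num.Theory.
Import numFieldNormedType.Exports.
Local Open Scope classical_set_scope.
Local Open Scope ring_scope.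

Section Defs.
Variable R : realType.

Definition chi (w : R) : R := (Num.sqrt (2 * pi))^-1 * expR (- (w ^+ 2) / 2).

Definition maxwellian (c A U : R) (xi : R) : R := A / c * chi ((xi - U) / c).

Definition energy_density (c g Zt : R) (f : R -> R) (xi : R) : R :=
  xi ^+ 2 / 2 * f xi + c ^+ 2 * f xi * ln (f xi)
  + c ^+ 2 * f xi * ln (c * Num.sqrt (2 * pi)) + g * Zt * f xi.

Definition energy (c g Zt : R) (f : R -> R) : \bar R :=
  (\int[@lebesgue_measure R]_(x in setT) (energy_density c g Zt f x)%:E)%E.

Definition admissible (A Q : R) (f : R -> R) : Prop :=
  [/\ measurable_fun setT f /\ (forall x, 0 < f x),
      (@lebesgue_measure R).-integrable setT (fun x => (f x)%:E),
      (@lebesgue_measure R).-integrable setT (fun x => (x * f x)%:E),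
      (\int[@lebesgue_measure R]_(x in setT) (f x)%:E = A%:E)%E &
      (\int[@lebesgue_measure R]_(x in setT) (x * f x)%:E = Q%:E)%E].

End Defs.

(* Main.v *)
Require Import Defs.
From HB Require Import structures.
From mathcomp Require Import all_boot all_order all_algebra.
From mathcomp Require Import all_classical all_reals all_analysis.
From mathcomp Require Import ring lra.
From mathcomp Require Import measurable_realfun.
Import Order.TTheory GRing.Theory Num.Theory.
Import numFieldNormedType.Exports.
Local Open Scope classical_set_scope.
Local Open Scope ring_scope.
Section Gauss.
Variables (R : realType) (c : R).
Hypothesis hc : 0 < c.
Let mu := @lebesgue_measure R.

Definition psi (x : R) : R := normal_pdf 0 c x.
Definition fa (x : R) : R := `|x| * psi x.
Definition fp (x : R) : R := (`|x| + x) / 2 * psi x.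
Definition fn (x : R) : R := (`|x| - x) / 2 * psi x.

Lemma cn0 : c != 0. Proof. by rewrite gt_eqF. Qed.

Lemma psi_gt0 x : 0 < psi x.
Proof.
by rewrite /psi normal_pdfE ?cn0 // mulr_gt0 ?normal_peak_gt0 ?cn0 ?expR_gt0.
Qed.

Lemma psi_cont : continuous psi.
Proof. exact: continuous_normal_pdf cn0. Qed.

Lemma id_cont : continuous (fun x : R => x).
Proof. by move=> x; exact: cvg_id. Qed.

Lemma abs_cont : continuous (fun x : R => `|x|).
Proof. exact: norm_continuous. Qed.

Lemma fa_cont : continuous fa.
Proof. move=> x; apply: continuousM; [exact: abs_cont | exact: psi_cont]. Qed.

Lemma fp_cont : continuous fp.
Proof.
move=> x; apply: (continuousM (s := fun x : R => (`|x| + x) / 2) (t := psi)); last exact: psi_cont.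
apply: (continuousM (s := fun x : R => `|x| + x) (t := fun _ : R => 2^-1)); last exact: cst_continuous.
apply: continuousD; [exact: abs_cont | exact: id_cont].
Qed.

Lemma fn_cont : continuous fn.
Proof.
move=> x; apply: (continuousM (s := fun x : R => (`|x| - x) / 2) (t := psi)); last exact: psi_cont.
apply: (continuousM (s := fun x : R => `|x| - x) (t := fun _ : R => 2^-1)); last exact: cst_continuous.
apply: continuousB; [exact: abs_cont | exact: id_cont].
Qed.

Lemma fa_ge0 x : 0 <= fa x.
Proof. by rewrite /fa mulr_ge0 // ltW // psi_gt0. Qed.
Lemma fp_ge0 x : 0 <= fp x.
Proof.
rewrite /fp; apply: mulr_ge0; last exact: ltW (psi_gt0 x).
have h1 : - x <= `|x| by rewrite -normrN ler_norm.
apply: divr_ge0 => //; lra.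
Qed.
Lemma fn_ge0 x : 0 <= fn x.
Proof.
rewrite /fn; apply: mulr_ge0; last exact: ltW (psi_gt0 x).
have h1 : x <= `|x| by rewrite ler_norm.
apply: divr_ge0 => //; lra.
Qed.


Definition sg : R := c * Num.sqrt 2.
Lemma sg_gt0 : 0 < sg. Proof. by rewrite /sg mulr_gt0 // sqrtr_gt0. Qed.
Lemma sg2 : sg ^+ 2 = 2 * c ^+ 2.
Proof. by rewrite /sg exprMn sqr_sqrtr // mulrC. Qed.

Definition Kb : R := c * normal_peak c / normal_peak sg.

Lemma fa_bound x : fa x <= Kb * normal_pdf 0 sg x.
Proof.
have sgn : sg != 0 by rewrite gt_eqF // sg_gt0.
rewrite /fa /psi /Kb !normal_pdfE ?cn0 // /normal_fun.
have pc := normal_peak_gt0 cn0.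
have ps := normal_peak_gt0 sgn.
set t := (x - 0) ^+ 2 / (c ^+ 2 *+ 4).
have e1 : - (x - 0) ^+ 2 / (sg ^+ 2 *+ 2) = - t.
  by rewrite sg2 /t; field; exact: cn0.
have e2 : - (x - 0) ^+ 2 / (c ^+ 2 *+ 2) = - t + - t.
  by rewrite /t; field; exact: cn0.
rewrite e1 e2 expRD.
have hE : `|x| * expR (- t) <= c.
  rewrite expRN ler_pdivrMr ?expR_gt0 //.
  apply: le_trans (_ : _ <= c * (1 + t)) _; last first.
    by apply: ler_wpM2l; [exact: ltW | exact: expR_ge1Dx].
  rewrite -subr_ge0.
  have hsq : (x - 0) ^+ 2 = `|x| ^+ 2 by rewrite subr0 real_normK // num_real.
  have -> : c * (1 + t) - `|x| = (`|x| - 2 * c) ^+ 2 / (c *+ 4).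
    by rewrite /t hsq; field; exact: cn0.
  by rewrite divr_ge0 ?sqr_ge0 // mulrn_wge0 // ltW.
set E := expR (- t).
have E0 : 0 < E by rewrite expR_gt0.
have psn : normal_peak sg != 0 by rewrite gt_eqF.
have -> : c * normal_peak c / normal_peak sg * (normal_peak sg * E) = (normal_peak c * E) * c.
  by field.
have -> : `|x| * (normal_peak c * (E * E)) = (normal_peak c * E) * (`|x| * E) by ring.
by rewrite ler_wpM2l // ltW // mulr_gt0.
Qed.

Lemma fa_int : mu.-integrable setT (EFin \o fa).
Proof.
apply: (@le_integrable _ _ _ mu setT measurableT _ (fun x => (Kb * normal_pdf 0 sg x)%:E)).
- by apply/measurable_EFinP; exact: continuous_measurable_fun fa_cont.
- move=> x _; rewrite /= lee_fin ger0_norm ?fa_ge0 //.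
  by apply: le_trans (fa_bound x) _; exact: ler_norm.
- apply: (@eq_integrable _ _ _ mu setT measurableT (fun x => Kb%:E * (normal_pdf 0 sg x)%:E)%E).
    by move=> x _; rewrite EFinM.
  by apply: integrableZl => //; exact: integrable_normal_pdf.
Qed.

Lemma fpn_fa x : fp x + fn x = fa x.
Proof. by rewrite /fp /fn /fa; field. Qed.

Lemma fp_int : mu.-integrable setT (EFin \o fp).
Proof.
apply: (@le_integrable _ _ _ mu setT measurableT _ (EFin \o fa)) => //.
- by apply/measurable_EFinP; exact: continuous_measurable_fun fp_cont.
- move=> x _; rewrite /= lee_fin ger0_norm ?fp_ge0 // ger0_norm ?fa_ge0 //.
  by rewrite -fpn_fa lerDl fn_ge0.
- exact: fa_int.
Qed.

Lemma fn_int : mu.-integrable setT (EFin \o fn).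
Proof.
apply: (@le_integrable _ _ _ mu setT measurableT _ (EFin \o fa)) => //.
- by apply/measurable_EFinP; exact: continuous_measurable_fun fn_cont.
- move=> x _; rewrite /= lee_fin ger0_norm ?fn_ge0 // ger0_norm ?fa_ge0 //.
  by rewrite -fpn_fa lerDr fp_ge0.
- exact: fa_int.
Qed.

Lemma psiN x : psi (- x) = psi x.
Proof. by rewrite /psi !normal_pdfE ?cn0 // /normal_fun !subr0 sqrrN. Qed.

Lemma int_fp_fn : (\int[mu]_x (fp x)%:E = \int[mu]_x (fn x)%:E)%E.
Proof.
have H1 : (\int[mu]_x (fa x)%:E = \int[mu]_x (fp x)%:E + \int[mu]_x (fn x)%:E)%E.
  rewrite -ge0_integralD //.
  - by apply: eq_integral => x _; rewrite -EFinD fpn_fa.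
  - by move=> x _; rewrite lee_fin fp_ge0.
  - by apply/measurable_EFinP; exact: continuous_measurable_fun fp_cont.
  - by move=> x _; rewrite lee_fin fn_ge0.
  - by apply/measurable_EFinP; exact: continuous_measurable_fun fn_cont.
have H2 := @ge0_symfun_integralT R fa fa_ge0 fa_cont.
have H3 : (\int[mu]_(x in [set x : R | (0 <= x)%R]) (fa x)%:E = \int[mu]_x (fp x)%:E)%E.
  rewrite integral_mkcond; apply: eq_integral => x _.
  rewrite patchE; case: ifP => [/set_mem /= x0 | /negbT xn].
    by rewrite /fa /fp ger0_norm //; congr EFin; field.
  have xl : x < 0.
    by rewrite ltNge; apply/negP => x0; move: xn; rewrite mem_set.
  by rewrite /fp ltr0_norm // addNr mul0r mul0r.
have H2' : (\int[mu]_x (fa x)%:E = 2%:E * \int[mu]_x (fp x)%:E)%E.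
  rewrite -H3; apply: H2 => x /=.
  by rewrite /fa normrN psiN.
have fpf := integrable_fin_num measurableT fp_int.
have fnf := integrable_fin_num measurableT fn_int.
move: H1 fpf fnf; rewrite H2'.
move: (\int[mu]_x (fp x)%:E)%E (\int[mu]_x (fn x)%:E)%E => [rp| |] [rq| |] //= + _ _.
case=> h.
by rewrite (_ : rq = rp) //; lra.
Qed.

End Gauss.
Arguments psi {R}. Arguments fp {R}. Arguments fn {R}. Arguments fa {R}.
Arguments fp_cont {R c}. Arguments fn_cont {R c}. Arguments fp_ge0 {R c}. Arguments fn_ge0 {R c}.
Arguments fp_int {R c}. Arguments fn_int {R c}. Arguments int_fp_fn {R c}.

Lemma shift_int (R : realType) (G : R -> R) (U : R) : continuous G -> (forall x, 0 <= G x) ->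
  (\int[@lebesgue_measure R]_x (G (x - U))%:E = \int[@lebesgue_measure R]_x (G x)%:E)%E.
Proof.
move=> cG G0.
pose F := fun x : R => x - U.
have hF : forall x : R, is_derive x (1:R) F (1:R).
  by move=> x; apply: trigger_derive; rewrite /GRing.scale /= subr0.
have F1 : F^`()%classic = cst 1.
  by apply/funext => x; rewrite derive1E (@derive_val _ _ _ _ _ _ _ (hF x)).
rewrite (@increasing_ge0_integration_by_substitutionT R F G).
- by apply: eq_integral => x _; rewrite F1 /= mulr1.
- by move=> x y xy; rewrite /F ltrBlDr subrK.
- by rewrite F1; exact: cst_continuous.
- by rewrite F1; exact: is_cvg_cst.
- by rewrite F1; exact: is_cvg_cst.
- by move=> x; exact: (@ex_derive _ _ _ _ _ _ _ (hF x)).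
- exact: cvg_addrr_Ny.
- exact: cvg_addrr.
- exact: cG.
- exact: G0.
Qed.

Arguments shift_int {R G}.

Lemma shift_integrable (R : realType) (G : R -> R) (U : R) : continuous G -> (forall x, 0 <= G x) ->
  (@lebesgue_measure R).-integrable setT (EFin \o G) ->
  (@lebesgue_measure R).-integrable setT (EFin \o (fun x => G (x - U))).
Proof.
move=> cG G0 iG; apply/integrableP; split.
  apply/measurable_EFinP; apply: measurableT_comp.
    exact: continuous_measurable_fun cG.
  exact: measurable_funB.
under eq_integral do rewrite /= ger0_norm ?G0 //.
rewrite shift_int //.
have := integrable_fin_num measurableT iG; rewrite fin_numE => /andP [_ h].
by rewrite ltey.
Qed.

Arguments shift_integrable {R G}.

Lemma pdf_psi (R : realType) (c U x : R) : 0 < c -> normal_pdf U c x = psi c (x - U).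
Proof. by move=> hc; rewrite /psi !normal_pdfE ?gt_eqF // /normal_fun subr0. Qed.

Lemma moment1 (R : realType) (c U : R) : 0 < c ->
  (@lebesgue_measure R).-integrable setT (fun x => (x * normal_pdf U c x)%:E) /\
  (\int[@lebesgue_measure R]_x (x * normal_pdf U c x)%:E = U%:E)%E.
Proof.
move=> hc.
have ip := shift_integrable U (fp_cont hc) (fp_ge0 hc) (fp_int hc).
have in_ := shift_integrable U (fn_cont hc) (fn_ge0 hc) (fn_int hc).
have iphi := @integrable_normal_pdf R U c.
have ek : forall x, x * normal_pdf U c x = (fp c (x - U) - fn c (x - U)) + U * normal_pdf U c x.
  by move=> x; rewrite pdf_psi // /fp /fn; field.
have ik : (@lebesgue_measure R).-integrable setT (EFin \o (fun x => fp c (x - U) - fn c (x - U))).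
  have := integrableB measurableT ip in_.
  apply: eq_integrable => // x _; by rewrite /= EFinB.
have iu : (@lebesgue_measure R).-integrable setT (EFin \o (fun x => U * normal_pdf U c x)).
  have := integrableZl measurableT U iphi.
  apply: eq_integrable => // x _; by rewrite /= EFinM.
split.
  have := integrableD measurableT ik iu.
  apply: eq_integrable => // x _; by rewrite /= -EFinD ek.
under eq_integral do rewrite ek.
under eq_integral do rewrite EFinD.
rewrite (integralD_EFin measurableT ik iu).
under eq_integral do rewrite /= EFinB.
rewrite (integralB_EFin measurableT ip in_).
rewrite (shift_int U (fp_cont hc) (fp_ge0 hc)) (shift_int U (fn_cont hc) (fn_ge0 hc)).
rewrite (int_fp_fn hc).
under eq_integral do rewrite /= EFinM.
rewrite integralZl // integral_normal_pdf.
have := integrable_fin_num measurableT (fn_int hc).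
move: (\int[lebesgue_measure]_x (fn c x)%:E)%E => [r| |] //= _.
by rewrite -EFinB subrr add0e mule1.
Qed.
Arguments moment1 {R c}.
Lemma le_integral_lb (R : realType) (L d : R -> R) :
  (@lebesgue_measure R).-integrable setT (EFin \o L) -> measurable_fun setT d ->
  (forall x, L x <= d x) ->
  (\int[@lebesgue_measure R]_(x in setT) (L x)%:E <=
   \int[@lebesgue_measure R]_(x in setT) (d x)%:E)%E.
Proof.
move=> iL md Ld.
have mL := measurable_int _ iL.
move/measurable_realfun.measurable_EFinP: (md) => md'.
rewrite integralE [X in (_ <= X)%E]integralE.
apply: leeB.
- apply: ge0_le_integral => //.
  + exact: measurable_realfun.measurable_funepos mL.
  + exact: measurable_realfun.measurable_funepos md'.
  + move=> x _; apply: funepos_le; last exact: in_setT.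
    by move=> y _; rewrite /= lee_fin.
- apply: ge0_le_integral => //.
  + exact: measurable_realfun.measurable_funeneg md'.
  + exact: measurable_realfun.measurable_funeneg mL.
  + move=> x _; apply: funeneg_le; last exact: in_setT.
    by move=> y _; rewrite /= lee_fin.
Qed.

Lemma int_lin (R : realType) (h1 h2 : R -> R) (k1 k2 r1 r2 : R) :
  (@lebesgue_measure R).-integrable setT (fun x => (h1 x)%:E) ->
  (\int[@lebesgue_measure R]_x (h1 x)%:E = r1%:E)%E ->
  (@lebesgue_measure R).-integrable setT (fun x => (h2 x)%:E) ->
  (\int[@lebesgue_measure R]_x (h2 x)%:E = r2%:E)%E ->
  (@lebesgue_measure R).-integrable setT (fun x => (k1 * h1 x + k2 * h2 x)%:E) /\
  (\int[@lebesgue_measure R]_x (k1 * h1 x + k2 * h2 x)%:E = (k1 * r1 + k2 * r2)%:E)%E.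
Proof.
move=> i1 e1 i2 e2.
have j1 := integrableZl measurableT k1 i1.
have j2 := integrableZl measurableT k2 i2.
have j1' : (@lebesgue_measure R).-integrable setT (EFin \o (fun x => k1 * h1 x)).
  by apply: eq_integrable j1 => // x _; rewrite /= EFinM.
have j2' : (@lebesgue_measure R).-integrable setT (EFin \o (fun x => k2 * h2 x)).
  by apply: eq_integrable j2 => // x _; rewrite /= EFinM.
split.
  have := integrableD measurableT j1' j2'.
  by apply: eq_integrable => // x _; rewrite /= EFinD.
under eq_integral do rewrite EFinD.
rewrite (integralD_EFin measurableT j1' j2') /=.
under eq_integral do rewrite EFinM.
rewrite integralZl // e1.
under eq_integral do rewrite EFinM.
by rewrite integralZl // e2 -EFinM -EFinM -EFinD.
Qed.
Arguments int_lin {R h1 h2} k1 k2 {r1 r2}.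

Section Part1.
Variables (R : realType) (c g : R).
Hypothesis hc : 0 < c.
Variables (A Q Zt : R).
Hypothesis hA : 0 < A.
Let U := Q / A.
Let M := maxwellian c A U.
Let mu := @lebesgue_measure R.

Lemma cn : c != 0. Proof. by rewrite gt_eqF. Qed.
Lemma An : A != 0. Proof. by rewrite gt_eqF. Qed.
Lemma sq_gt0 : 0 < Num.sqrt (2 * pi) :> R.
Proof. by rewrite sqrtr_gt0 mulr_gt0 // pi_gt0. Qed.

Lemma M_pdf x : M x = A * normal_pdf U c x.
Proof.
rewrite /M /maxwellian /chi normal_pdfE ?cn // /normal_peak /normal_fun.
have -> : c ^+ 2 * pi *+ 2 = c ^+ 2 * (2 * pi) by rewrite -mulrnAr -mulr_natl.
rewrite (@sqrtrM _ (c ^+ 2) (2 * pi)) ?sqr_ge0 // sqrtr_sqr ger0_norm ?ltW //.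
have -> : - ((x - U) / c) ^+ 2 / 2 = - (x - U) ^+ 2 / (c ^+ 2 *+ 2).
  by field; exact: cn.
have sn : Num.sqrt (2 * pi) != 0 :> R by rewrite gt_eqF // sq_gt0.
by field; rewrite cn sn.
Qed.

Lemma M_gt0 x : 0 < M x.
Proof. by rewrite M_pdf mulr_gt0 // pdf_psi // psi_gt0. Qed.

Lemma lnMx x : ln (M x) = ln A - ln (c * Num.sqrt (2 * pi)) - (x - U) ^+ 2 / (2 * c ^+ 2).
Proof.
have sp := sq_gt0.
have cs : 0 < c * Num.sqrt (2 * pi) by rewrite mulr_gt0.
have -> : M x = (A * (c * Num.sqrt (2 * pi))^-1) * expR (- ((x - U) / c) ^+ 2 / 2).
  rewrite /M /maxwellian /chi; have sn : Num.sqrt (2 * pi) != 0 :> R by rewrite gt_eqF.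
  by field; rewrite cn sn.
rewrite lnM ?posrE ?expR_gt0 ?mulr_gt0 ?invr_gt0 //.
rewrite lnM ?posrE ?invr_gt0 // lnV ?posrE // expRK.
by field; exact: cn.
Qed.

Definition Kc : R := c ^+ 2 * ln A + g * Zt - U ^+ 2 / 2.
Definition Lf (f : R -> R) (x : R) : R :=
  c ^+ 2 * (f x - M x) + f x * Kc + U * (x * f x).
Definition Tval : R := Q ^+ 2 / (2 * A) + c ^+ 2 * A * ln A + g * A * Zt.

Lemma dens_eq (f : R -> R) x : 0 < f x ->
  energy_density c g Zt f x = Lf f x + c ^+ 2 * (f x * (ln (f x) - ln (M x)) - f x + M x).
Proof.
move=> fx; rewrite lnMx /energy_density /Lf /Kc /U.
have sn : Num.sqrt (2 * pi) != 0 :> R by rewrite gt_eqF // sq_gt0.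
rewrite lnM ?posrE ?sq_gt0 //.
by field; rewrite cn An.
Qed.

Lemma gibbs (a b : R) : 0 < a -> 0 < b -> 0 <= a * (ln a - ln b) - a + b.
Proof.
move=> a0 b0.
set y := b / a.
have y0 : 0 < y by rewrite divr_gt0.
have hy : ln y <= y - 1.
  have := expR_ge1Dx (ln y); rewrite lnK ?posrE //; lra.
have -> : ln a - ln b = - ln y by rewrite /y ln_div ?posrE // opprB.
have -> : a * - ln y - a + b = a * (y - 1 - ln y).
  by rewrite /y; field; rewrite gt_eqF.
by apply: mulr_ge0; [exact: ltW | lra].
Qed.


Lemma int_ext (h h' : R -> R) (r : R) : (forall x, h x = h' x) ->
  mu.-integrable setT (fun x => (h x)%:E) /\ (\int[mu]_x (h x)%:E = r%:E)%E ->
  mu.-integrable setT (fun x => (h' x)%:E) /\ (\int[mu]_x (h' x)%:E = r%:E)%E.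
Proof.
move=> e [i1 e1]; split.
  by apply: eq_integrable i1 => // x _; rewrite e.
by rewrite -e1; apply: eq_integral => x _; rewrite e.
Qed.

Lemma M_int : mu.-integrable setT (fun x => (M x)%:E) /\ (\int[mu]_x (M x)%:E = A%:E)%E.
Proof.
have h := int_lin A 0 (@integrable_normal_pdf R U c) (integral_normal_pdf U c)
   (@integrable_normal_pdf R U c) (integral_normal_pdf U c).
have -> : A = A * 1 + 0 * 1 by rewrite mul0r addr0 mulr1.
apply: int_ext h => x; by rewrite mul0r addr0 M_pdf.
Qed.

Lemma xM_int : mu.-integrable setT (fun x => (x * M x)%:E) /\ (\int[mu]_x (x * M x)%:E = Q%:E)%E.
Proof.
have [i1 e1] := moment1 U hc.
have h := int_lin A 0 i1 e1 i1 e1.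
have -> : Q = A * U + 0 * U by rewrite /U; field; exact: An.
apply: int_ext h => x; rewrite mul0r addr0 M_pdf; ring.
Qed.

Lemma M_adm : admissible A Q M.
Proof.
have [i1 e1] := M_int.
have [i2 e2] := xM_int.
split => //; split; last exact: M_gt0.
have -> : M = (fun x => A * normal_pdf U c x) by apply/funext => x; rewrite M_pdf.
apply: measurable_funM => //; exact: measurable_normal_pdf.
Qed.

Lemma Lf_int f : admissible A Q f ->
  mu.-integrable setT (fun x => (Lf f x)%:E) /\ (\int[mu]_x (Lf f x)%:E = Tval%:E)%E.
Proof.
move=> [[mf fpos] ifn ixf ef exf].
have [iM eM] := M_int.
have [i3 e3] := int_lin (c ^+ 2 + Kc) (- c ^+ 2) ifn ef iM eM.
have [i4 e4] := int_lin 1 U i3 e3 ixf exf.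
have -> : Tval = 1 * ((c ^+ 2 + Kc) * A + - c ^+ 2 * A) + U * Q.
  by rewrite /Tval /Kc /U; field; exact: An.
by apply: int_ext (conj i4 e4) => x; rewrite /Lf; ring.
Qed.

Lemma dens_meas f : measurable_fun setT f -> measurable_fun setT (energy_density c g Zt f).
Proof.
move=> mf; rewrite /energy_density.
have ml := measurableT_comp (@measurable_ln R) mf.
repeat apply: measurable_funD; repeat apply: measurable_funM => //.
Qed.


Lemma part1_main :
  [/\ admissible A Q M,
      (forall f : R -> R, admissible A Q f ->
         (energy c g Zt M <= energy c g Zt f)%E) &
      energy c g Zt M = Tval%:E].
Proof.
have EM : energy c g Zt M = Tval%:E.
  have [_ e] := Lf_int M M_adm.
  rewrite /energy -e; apply: eq_integral => x _.
  rewrite dens_eq ?M_gt0 //.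
  by rewrite subrr mulr0 sub0r addNr mulr0 addr0.
split => //; first exact: M_adm.
move=> f hf; rewrite EM.
have [i e] := Lf_int f hf.
rewrite -e /energy.
have [[mf fpos] _ _ _ _] := hf.
apply: le_integral_lb => //.
  exact: dens_meas.
move=> x; rewrite dens_eq //.
rewrite lerDl mulr_ge0 ?sqr_ge0 //.
exact: gibbs (fpos x) (M_gt0 x).
Qed.

End Part1.
Lemma part2 (R : realType) (c g : R) (hc : 0 < c) (hg : 0 < g) :
  (forall (A Zt : R -> R),
     (forall X, 0 < A X) ->
     (forall X, derivable A X 1) ->
     (forall X, derivable Zt X 1) ->
     (exists C : R, forall X, c ^+ 2 * ln (A X) + g * Zt X = C) ->
     let M := fun X xi => maxwellian c (A X) 0 xi in
     forall X xi : R,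
       xi * derive1 (fun y => M y xi) X
       - g * derive1 Zt X * derive1 (fun w => M X w) xi = 0).
Proof.
move=> A Zt A0 dA dZ [C HC] M X xi.
have dAX := derivableP (dA X).
have dZX := derivableP (dZ X).
set a' := 'D_1 A X in dAX.
set z' := 'D_1 Zt X in dZX.
pose K := c^-1 * chi ((xi - 0)/c).
have e1 : derive1 (fun y => M y xi) X = K * a'.
  rewrite derive1E.
  have -> : (fun y => M y xi) = K \*: A.
    apply/funext => y; rewrite /M /maxwellian /K /=; change (A y / c * chi ((xi - 0) / c) = c^-1 * chi ((xi - 0) / c) * A y); ring.
  have hh := @is_deriveZ R R R A K X 1 _ dAX.
  exact: (@derive_val _ _ _ _ _ _ _ hh).
pose h := fun X => c ^+ 2 * ln (A X) + g * Zt X.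
have hd : is_derive X 1 h (c ^+ 2 * ((A X)^-1 * a') + g * z').
  have hl := @is_derive1_comp R (@ln R) A X _ _ (is_derive1_ln (A0 X)) dAX.
  have hl2 := @is_deriveZ R R R (@ln R \o A) (c ^+ 2) X 1 _ hl.
  have hz2 := @is_deriveZ R R R Zt g X 1 _ dZX.
  exact: (@is_deriveD R R R _ _ X 1 _ _ hl2 hz2).
have h0 : c ^+ 2 * ((A X)^-1 * a') + g * z' = 0.
  have hC : h = cst C by apply/funext => y; rewrite /h HC.
  rewrite hC in hd.
  by rewrite -(@derive_val _ _ _ _ _ _ _ hd) derive_cst.
have cn : c != 0 by rewrite gt_eqF.
have e2 : derive1 (fun w => M X w) xi = A X * K * (- xi / c ^+ 2).
  have hd2 : is_derive xi 1 (fun w => A X / c / Num.sqrt (2 * pi) * expR (- ((w - 0) / c) ^+ 2 / 2)) (A X * K * (- xi / c ^+ 2)).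
    apply: trigger_derive.
    have sn : Num.sqrt (2 * pi) != 0 :> R by rewrite gt_eqF // sqrtr_gt0 mulr_gt0 // pi_gt0.
    rewrite /K /chi /GRing.scale /=.
    by field; rewrite cn sn.
  rewrite derive1E.
  have -> : (fun w => M X w) = (fun w => A X / c / Num.sqrt (2 * pi) * expR (- ((w - 0) / c) ^+ 2 / 2)).
    by apply/funext => w; rewrite /M /maxwellian /chi /= !mulrA.
  exact: (@derive_val _ _ _ _ _ _ _ hd2).
rewrite e1 e2 derive1E -/z'.
have An : A X != 0 by rewrite gt_eqF.
have -> : xi * (K * a') - g * z' * (A X * K * (- xi / c ^+ 2)) =
   xi * K * A X / c ^+ 2 * (c ^+ 2 * ((A X)^-1 * a') + g * z').
  by field; rewrite An cn.
by rewrite h0 mulr0.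
Qed.

Theorem theorem3 (R : realType) (c g : R) (hc : 0 < c) (hg : 0 < g) :
  (forall (A Q Zt : R), 0 < A ->
     let M := maxwellian c A (Q / A) in
     [/\ admissible A Q M,
         (forall f : R -> R, admissible A Q f ->
            (energy c g Zt M <= energy c g Zt f)%E) &
         energy c g Zt M
           = (Q ^+ 2 / (2 * A) + c ^+ 2 * A * ln A + g * A * Zt)%:E])
  /\
  (forall (A Zt : R -> R),
     (forall X, 0 < A X) ->
     (forall X, derivable A X 1) ->
     (forall X, derivable Zt X 1) ->
     (exists C : R, forall X, c ^+ 2 * ln (A X) + g * Zt X = C) ->
     let M := fun X xi => maxwellian c (A X) 0 xi in
     forall X xi : R,
       xi * derive1 (fun y => M y xi) X
       - g * derive1 Zt X * derive1 (fun w => M X w) xi = 0).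
Proof.
split.
  move=> A Q Zt hA M.
  exact: (@part1_main R c g hc A Q Zt hA).
exact: part2.
Qed.
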